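(* Let $n\in\mathbb{N}$ and let $a,b$ be positive real numbers. For $p\ge1$ let $D_p(a,b)$ be the $p\times p$ matrix whose $(i,j)$ entry is $-a$ if $i=j$, $b$ if $j=i+1$, $a$ if $i=j+1$, $-b$ if $i=j+2$, and $0$ otherwise, and let $F_p(a,b)=D_p(-a,-b)^t$ (so $F_p(a,b)$ has $(i,j)$ entry $a$ if $i=j$, $-a$ if $j=i+1$, $b$ if $j=i+2$, $-b$ if $i=j+1$, and $0$ otherwise). Set $|D_{-1}(a,b)|=|F_{-1}(a,b)|=0$ and $|D_0(a,b)|=|F_0(a,b)|=1$. Let $E_n(a,b)$ be the $(n+1)\times n$ matrix whose $(i,j)$ entry is $-a$ if $i=j$, $b$ if $j=i+1$, $a$ if $i=j+1$, $-b$ if $i=j+2$, and $0$ otherwise. For $1\le k\le n+1$ let $E_n^k(a,b)$ be the $n\times n$ matrix obtained by deleting the $k$-th row of $E_n(a,b)$. Then $$|E_n^k(a,b)|=|D_{k-1}(a,b)|\,|F_{n-(k-1)}(a,b)|+|D_{k-2}(a,b)|\,|F_{n-k}(a,b)|\,b^2$$ $$=(-1)^{n-k+1}\big(|D_{k-1}(a,b)|\,|D_{n-k+1}(a,b)|-|D_{k-2}(a,b)|\,|D_{n-k}(a,b)|\,b^2\big).$$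
   Context: $|M|$ denotes the determinant of a square matrix $M$. *)

(* Defs.v *)
(* Matrices indexed 0-based; the entry conditions
   (i = j, j = i+1, i = j+1, i = j+2) are shift-invariant, so they agree
   with the paper's 1-based description. *)
From mathcomp Require Import all_boot all_order all_algebra.
Set Implicit Arguments. Unset Strict Implicit. Unset Printing Implicit Defensive.
Import Order.TTheory GRing.Theory Num.Theory.
Local Open Scope ring_scope.

Definition Dentry {R : ringType} (a b : R) (i j : nat) : R :=
  if i == j then - a
  else if j == i.+1 then b
  else if i == j.+1 then a
  else if i == j.+2 then - b
  else 0.

Definition Dmat {R : ringType} (p : nat) (a b : R) : 'M[R]_p :=
  \matrix_(i < p, j < p) Dentry a b i j.

Definition Fmat {R : ringType} (p : nat) (a b : R) : 'M[R]_p :=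
  (Dmat p (- a) (- b))^T.

Definition Emat {R : ringType} (n : nat) (a b : R) : 'M[R]_(n.+1, n) :=
  \matrix_(i < n.+1, j < n) Dentry a b i j.

(* E_n^k(a,b): delete the k-th row (1-based, 1 <= k <= n+1) of E_n(a,b) *)
Definition Emat_k {R : ringType} (n k : nat) (a b : R) : 'M[R]_n :=
  row' (inord k.-1 : 'I_n.+1) (Emat n a b).

(* |D_p(a,b)| for integer p, with |D_p| = 0 for p < 0 (only p = -1 is used);
   for p = 0 this is the determinant of the empty matrix, i.e. 1. *)
Definition detD {R : comRingType} (p : int) (a b : R) : R :=
  match p with Posz m => \det (Dmat m a b) | Negz _ => 0 end.

Definition detF {R : comRingType} (p : int) (a b : R) : R :=
  match p with Posz m => \det (Fmat m a b) | Negz _ => 0 end.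

(* Main.v *)
Require Import Defs.
From mathcomp Require Import all_boot all_order all_algebra.
From mathcomp Require Import perm zify ring lra.
Set Implicit Arguments. Unset Strict Implicit. Unset Printing Implicit Defensive.
Import Order.TTheory GRing.Theory Num.Theory.
Local Open Scope ring_scope.
Section Gen.
Variable R : comRingType.

Definition setrow n (X : 'M[R]_n) (i0 : 'I_n) (v : 'rV[R]_n) : 'M[R]_n :=
  \matrix_(i, j) if i == i0 then v 0 j else X i j.

Lemma row'_setrow n (X : 'M[R]_n) i0 v : row' i0 (setrow X i0 v) = row' i0 X.
Proof. by apply/matrixP => i j; rewrite !mxE eq_sym (negPf (neq_lift _ _)). Qed.

Lemma row_setrow n (X : 'M[R]_n) i0 v : row i0 (setrow X i0 v) = v.
Proof. by apply/matrixP => i j; rewrite !mxE eqxx ord1. Qed.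

Lemma setrow_id n (X : 'M[R]_n) i0 : setrow X i0 (row i0 X) = X.
Proof. by apply/matrixP => i j; rewrite !mxE; case: eqP => // ->. Qed.

Lemma det_setrow_delta n (X : 'M[R]_n) (i0 j0 : 'I_n) :
  \det (setrow X i0 (delta_mx 0 j0)) = cofactor X i0 j0.
Proof.
rewrite (expand_det_row _ i0) (bigD1 j0) //= big1 ?addr0.
  rewrite !mxE !eqxx mul1r /cofactor; congr (_ * \det _).
  by apply/matrixP => i j; rewrite !mxE eq_sym (negPf (neq_lift _ _)).
by move=> j hj; rewrite !mxE eqxx /= (negPf hj) mul0r.
Qed.

Lemma det_setrow0 n (X : 'M[R]_n) i0 : \det (setrow X i0 0) = 0.
Proof.
by rewrite (expand_det_row _ i0) big1 // => j _; rewrite !mxE eqxx mul0r.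
Qed.

Lemma det_xrow n (X : 'M[R]_n) i1 i2 : i1 != i2 -> \det (xrow i1 i2 X) = - \det X.
Proof.
by move=> h; rewrite xrowE det_mulmx det_perm odd_tperm h expr1 mulN1r.
Qed.

End Gen.
Lemma split_lshift m n (i : 'I_m) : split (lshift n i) = inl i.
Proof. exact: (unsplitK (inl i)). Qed.
Lemma split_rshift m n (i : 'I_n) : split (rshift m i) = inr i.
Proof. exact: (unsplitK (inr i)). Qed.

Ltac simp_blk := repeat (first [rewrite !mxE | rewrite !split_lshift | rewrite !split_rshift
  | rewrite !eq_lshift | rewrite !eq_rshift | rewrite !eq_lrshift | rewrite !eq_rlshift | progress simpl]).

Ltac blk := apply/matrixP; let i := fresh "i" in let j := fresh "j" in intros i j;
  case: (split_ordP i) => ? ->; case: (split_ordP j) => ? ->; simp_blk.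

Lemma row'_eqP (R : Type) n (X Y : 'M[R]_n) i0 :
  (forall i j, i != i0 -> X i j = Y i j) -> row' i0 X = row' i0 Y.
Proof. by move=> h; apply/matrixP => i j; rewrite !mxE h // eq_sym neq_lift. Qed.

Ltac blk' := apply: row'_eqP; let i := fresh "i" in let j := fresh "j" in intros i j;
  case: (split_ordP i) => ? ->; case: (split_ordP j) => ? ->; simp_blk; 
  let h := fresh "h" in move=> h; rewrite ?(eq_sym ord_max) ?(eq_sym ord0) ?(negPf h) ?eqxx /=.

Lemma xrow_entry (R : Type) n (X : 'M[R]_n) i1 i2 i j :
  xrow i1 i2 X i j = X (if i == i1 then i2 else if i == i2 then i1 else i) j.
Proof. by rewrite !mxE; case: tpermP => [->|->|/eqP/negPf-> /eqP/negPf->]; rewrite ?eqxx //; case: eqP => [->|]. Qed.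

Section Block.
Variable R : comRingType.
Variables (p q : nat) (A : 'M[R]_p.+1) (G : 'M[R]_q.+1) (be de : R).

Local Notation T := (block_mx A (be *: delta_mx ord_max ord0) (de *: delta_mx ord0 ord_max) G).
Local Notation r := (lshift q.+1 (ord_max : 'I_p.+1)).
Local Notation s := (rshift p.+1 (ord0 : 'I_q.+1)).

Lemma step1 : \det T = \det A * \det G
   + be * \det (setrow T r (delta_mx 0 s)).
Proof.
rewrite (determinant_multilinear (B := block_mx A 0 (de *: delta_mx ord0 ord_max) G)
   (C := setrow T r (delta_mx 0 s)) (i0 := r) (b := 1) (c := be)).
- by rewrite det_lblock mul1r.
- rewrite row_setrow scale1r. apply/rowP => j.
  case: (split_ordP j) => j' ->; simp_blk; rewrite ?eqxx /=; ring.
- by blk'; ring.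
- exact: row'_setrow.
Qed.

Lemma step2 : \det (setrow T r (delta_mx 0 s)) =
   de * \det (setrow (setrow T r (delta_mx 0 s)) s (delta_mx 0 r)).
Proof.
rewrite (determinant_multilinear (B := block_mx (setrow A ord_max 0) (delta_mx ord_max ord0) 0 G)
   (C := setrow (setrow T r (delta_mx 0 s)) s (delta_mx 0 r)) (i0 := s) (b := 1) (c := de)).
- by rewrite det_ublock det_setrow0 !mul0r mul1r add0r.
- rewrite (row_setrow (setrow T r _) s) scale1r. apply/rowP => j.
  case: (split_ordP j) => j' ->; simp_blk; rewrite ?eqxx /=; try ring.
- by blk'; try (case: eqP => _ /=); ring.
- by rewrite row'_setrow.
Qed.

Lemma step3 : \det (setrow (setrow T r (delta_mx 0 s)) s (delta_mx 0 r)) =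
  - (cofactor A ord_max ord_max * cofactor G ord0 ord0).
Proof.
have ne : r != s by rewrite eq_lrshift.
rewrite -[LHS]opprK -(det_xrow _ ne); congr (- _).
rewrite -det_setrow_delta -(det_setrow_delta G) -(det_ublock _ 0).
congr (\det _).
apply/matrixP => i j; rewrite xrow_entry.
case: (split_ordP i) => i' ->; case: (split_ordP j) => j' ->; simp_blk.
1,2: case: (i' =P ord_max) => [e|/eqP hi]; try subst i'; simp_blk; rewrite ?eqxx /= ?(negPf hi) /=.
all: try (case: (i' =P ord0) => [e|/eqP hi]; try subst i'; simp_blk; rewrite ?eqxx /= ?(negPf hi) /=).
all: try ring.
Qed.

Lemma det_block_special : \det T =
  \det A * \det G - be * de * cofactor A ord_max ord_max * cofactor G ord0 ord0.
Proof. rewrite step1 step2 step3; ring. Qed.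
End Block.
Ltac dent := rewrite /Dentry; repeat (case: eqP => ? /=); try lia; rewrite ?opprK //.

Section App.
Variable R : comRingType.
Variables (a b : R).

Lemma DentrySS i j : Dentry a b i.+1 j.+1 = Dentry a b i j.
Proof. by rewrite /Dentry !eqSS. Qed.

Lemma cofD p : cofactor (Dmat p.+1 a b) ord_max ord_max = \det (Dmat p a b).
Proof.
rewrite /cofactor /= addnn -signr_odd odd_double expr0 mul1r.
congr (\det _); apply/matrixP => i j; rewrite !mxE !lift_max //.
Qed.

Lemma cofF q : cofactor (Fmat q.+1 a b) ord0 ord0 = \det (Fmat q a b).
Proof.
rewrite /cofactor /= expr0 mul1r.
congr (\det _); apply/matrixP => i j; rewrite !mxE !lift0 /Dentry !eqSS; dent.
Qed.

Lemma Emat_block p q :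
  Emat_k (p.+1 + q.+1) p.+2 a b =
  block_mx (Dmat p.+1 a b) (b *: delta_mx ord_max ord0) (- b *: delta_mx ord0 ord_max) (Fmat q.+1 a b).
Proof.
apply/matrixP => i j.
rewrite /Emat_k /Emat.
case: (split_ordP i) => i' ->; case: (split_ordP j) => j' ->; simp_blk.
all: rewrite /bump inordK; last lia.
all: rewrite -?(inj_eq val_inj) /=.
all: have := ltn_ord i'; have := ltn_ord j' => hj hi.
all: rewrite /Dentry; repeat (case: eqP => ? /=); try lia; rewrite ?mulr1 ?mulr0 ?opprK //.
Qed.
End App.

Section Main.
Variable R : comRingType.
Variables (a b : R).

Lemma detF_D m : \det (Fmat m a b) = (-1) ^+ m * \det (Dmat m a b).
Proof.
rewrite /Fmat det_tr -detZ; congr (\det _); apply/matrixP => i j; rewrite !mxE.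
rewrite mulN1r; dent; by rewrite oppr0.
Qed.

Lemma Emat_1 n : Emat_k n 1 a b = Fmat n a b.
Proof.
apply/matrixP => i j; rewrite !mxE /= /bump inordK //= add1n.
dent.
Qed.

Lemma Emat_last n : Emat_k n n.+1 a b = Dmat n a b.
Proof.
apply/matrixP => i j; rewrite !mxE /= /bump inordK //=.
have := ltn_ord i => hi.
by rewrite (_ : (n <= i)%N = false) ?add0n //; lia.
Qed.
End Main.

Theorem proposition2p2 (R : realFieldType) (n k : nat) (a b : R)
  (ha : 0 < a) (hb : 0 < b) (hk1 : (1 <= k)%N) (hk2 : (k <= n.+1)%N) :
  \det (Emat_k n k a b)
    = detD (k%:Z - 1) a b * detF (n%:Z - (k%:Z - 1)) a b
      + detD (k%:Z - 2) a b * detF (n%:Z - k%:Z) a b * b ^+ 2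
  /\
  \det (Emat_k n k a b)
    = (-1) ^+ (n.+1 - k)%N *
      (detD (k%:Z - 1) a b * detD (n%:Z - k%:Z + 1) a b
       - detD (k%:Z - 2) a b * detD (n%:Z - k%:Z) a b * b ^+ 2).
Proof.
case: k hk1 hk2 => [//|[|k]] _ hk2.
  have -> : (1%:Z - 1 = 0 :> int)%R by lia.
  have -> : (1%:Z - 2 = Negz 0 :> int)%R by lia.
  have -> : (n%:Z - 0 = n%:Z :> int)%R by lia.
  have -> : (n%:Z - 1 + 1 = n%:Z :> int)%R by lia.
  rewrite Emat_1 /detD /detF subSS subn0 det_mx00 detF_D.
  split; ring.
case: (ltnP k.+1 n) => hkn.
  have [q eq] : exists q, n = (k.+1 + q.+1)%N by exists (n - k.+2)%N; lia.
  subst n.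
  have -> : (k.+2%:Z - 1 = k.+1%:Z :> int)%R by lia.
  have -> : (k.+2%:Z - 2 = k%:Z :> int)%R by lia.
  have -> : ((k.+1 + q.+1)%N%:Z - k.+1%:Z = q.+1%:Z :> int)%R by lia.
  have -> : ((k.+1 + q.+1)%N%:Z - k.+2%:Z = q%:Z :> int)%R by lia.
  have -> : (q%:Z + 1 = q.+1%:Z :> int)%R by lia.
  have -> : ((k.+1 + q.+1).+1 - k.+2 = q.+1)%N by lia.
  rewrite Emat_block det_block_special cofD cofF /detD /detF !detF_D.
  split; rewrite !exprS; ring.
have e : n = k.+1 by lia.
subst n.
have -> : (k.+2%:Z - 1 = k.+1%:Z :> int)%R by lia.
have -> : (k.+2%:Z - 2 = k%:Z :> int)%R by lia.
have -> : (k.+1%:Z - k.+1%:Z = 0 :> int)%R by lia.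
have -> : (k.+1%:Z - k.+2%:Z + 1 = 0 :> int)%R by lia.
have -> : (k.+1%:Z - k.+2%:Z = Negz 0 :> int)%R by lia.
rewrite subnn Emat_last /detD /detF !det_mx00.
split; ring.
Qed.
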